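(* A topological space $X$ is ultrametrizable in the ordinary sense (i.e. $\mathrm{Ult}(X;\mathbb{R}_{\ge0})\ne\emptyset$) if and only if $\omega_0\in\mathrm{MG}(X)$.
   Context: A linearly ordered Abelian group is an Abelian group with a linear order compatible with addition. For $x,y\in G_{>0}$, $x\asymp y$ iff $y\le nx$ and $x\le my$ for some $n,m\in\mathbb{Z}_{\ge1}$; $\mathrm{Arc}(G)=G_{>0}/\asymp$, ordered by $[x]\preceq[y]$ iff ($nx<y$ for all $n$) or $x\asymp y$; $\mathrm{Arc}(G)^\perp$ is $\mathrm{Arc}(G)$ with a new least element adjoined. For a bottomed linearly ordered set $S$ (least element $\perp_S$, $S^*=S\setminus\{\perp_S\}$), $\chi(S)$ is the least cardinal $\kappa>0$ such that some strictly decreasing family $(s_\alpha)_{\alpha<\kappa}$ in $S^*$ has every $t\in S^*$ bounded below by some $s_\alpha$. A $G$-metric on $X$: $d\colon X^2\to G$ with $d(x,y)=0\iff x=y$, $d\ge0$, symmetric, triangle inequality; $\mathrm{Met}(X;G)$ is the set of $G$-metrics generating the topology of $X$ (via open balls). An $S$-ultrametric: $d\colon X^2\to S$ with $d(x,y)=\perp_S\iff x=y$, symmetric, $d(x,y)\le\max\{d(x,z),d(z,y)\}$; $\mathrm{Ult}(X;S)$ those generating the topology. $\kappa\in\mathrm{MG}(X)$ iff some linearly ordered Abelian group $G$ with $\chi(\mathrm{Arc}(G)^\perp)=\kappa$ has $\mathrm{Met}(X;G)\ne\emptyset$. *)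

(* Defs.v *)
From HB Require Import structures.
From mathcomp Require Import all_boot all_order all_algebra.
From mathcomp Require Import all_classical all_reals topology.
From mathcomp Require Import Rstruct Rstruct_topology.

Set Implicit Arguments.
Unset Strict Implicit.
Unset Printing Implicit Defensive.
Import Order.TTheory GRing.Theory Num.Theory.
Local Open Scope classical_set_scope.
Local Open Scope ring_scope.

Definition lin_ord_abelian (G : zmodType) (le : G -> G -> Prop) : Prop :=
  (forall x, le x x) /\
  (forall x y, le x y -> le y x -> x = y) /\
  (forall x y z, le x y -> le y z -> le x z) /\
  (forall x y, le x y \/ le y x) /\
  (forall x y z, le x y -> le (x + z) (y + z)).

Definition lt_of (G : zmodType) (le : G -> G -> Prop) (x y : G) : Prop :=
  le x y /\ x <> y.

Definition arc_equiv (G : zmodType) (le : G -> G -> Prop) (x y : G) : Prop :=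
  (exists n : nat, (1 <= n)%N /\ le y (x *+ n)) /\
  (exists m : nat, (1 <= m)%N /\ le x (y *+ m)).

(* The order on Arc(G) = G_{>0}/≍, expressed on representatives:
   [x] ⪯ [y] iff (n x < y for all n >= 1) or x ≍ y. *)
Definition arc_le (G : zmodType) (le : G -> G -> Prop) (x y : G) : Prop :=
  (forall n : nat, (1 <= n)%N -> lt_of le (x *+ n) y) \/ arc_equiv le x y.

Definition arc_lt (G : zmodType) (le : G -> G -> Prop) (x y : G) : Prop :=
  arc_le le x y /\ ~ arc_le le y x.

(* A strictly decreasing family (s_a)_{a in I} (I ordered by ltI) in
   Arc(G) = (Arc(G)^⊥)^*, given by representatives in G_{>0}, such that
   every t in Arc(G) is bounded below by some s_a. *)
Definition arc_coinitial_dec_family (G : zmodType) (le : G -> G -> Prop)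
    (I : Type) (ltI : I -> I -> Prop) (s : I -> G) : Prop :=
  (forall a, lt_of le 0 (s a)) /\
  (forall a b, ltI a b -> arc_lt le (s b) (s a)) /\
  (forall t, lt_of le 0 t -> exists a, arc_le le (s a) t).

(* χ(Arc(G)^⊥) = ω₀ : the least cardinal κ > 0 admitting such a family
   (indexed by the ordinals α < κ) is ω₀; i.e. no nonzero finite cardinal
   k admits one (indices 'I_k with the usual order), and ω₀ (indices nat)
   does. *)
Definition chi_arc_eq_omega0 (G : zmodType) (le : G -> G -> Prop) : Prop :=
  (forall k : nat, (0 < k)%N ->
     ~ exists s : 'I_k -> G,
         arc_coinitial_dec_family le (fun a b : 'I_k => (a < b)%N) s) /\
  (exists s : nat -> G, arc_coinitial_dec_family le (fun a b : nat => (a < b)%N) s).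

Definition is_Gmetric (X : Type) (G : zmodType) (le : G -> G -> Prop)
    (d : X -> X -> G) : Prop :=
  (forall x y, d x y = 0 <-> x = y) /\
  (forall x y, le 0 (d x y)) /\
  (forall x y, d x y = d y x) /\
  (forall x y z, le (d x y) (d x z + d z y)).

Definition Gmetric_generates (X : topologicalType) (G : zmodType)
    (le : G -> G -> Prop) (d : X -> X -> G) : Prop :=
  forall U : set X, open U <->
    (forall x, U x -> exists r : G, lt_of le 0 r /\
        [set y | lt_of le (d x y) r] `<=` U).

Definition in_Met (X : topologicalType) (G : zmodType) (le : G -> G -> Prop)
    (d : X -> X -> G) : Prop :=
  is_Gmetric le d /\ Gmetric_generates le d.

Definition omega0_in_MG (X : topologicalType) : Prop :=
  exists (G : zmodType) (le : G -> G -> Prop),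
    lin_ord_abelian le /\ chi_arc_eq_omega0 le /\
    exists d : X -> X -> G, in_Met le d.

Definition is_R_ultrametric (X : Type) (d : X -> X -> Rdefinitions.R) : Prop :=
  (forall x y, 0 <= d x y) /\
  (forall x y, d x y = 0 <-> x = y) /\
  (forall x y, d x y = d y x) /\
  (forall x y z, d x y <= Num.max (d x z) (d z y)).

Definition in_Ult_R (X : topologicalType) (d : X -> X -> Rdefinitions.R) : Prop :=
  is_R_ultrametric d /\
  (forall U : set X, open U <->
     (forall x, U x -> exists r : Rdefinitions.R, 0 < r /\ [set y | d x y < r] `<=` U)).

(* Main.v *)
Require Import Defs.
From mathcomp Require Import all_boot all_order all_algebra.
From mathcomp Require Import all_classical all_reals topology.
From mathcomp Require Import Rstruct Rstruct_topology.
From mathcomp Require Import zify lra.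
Set Implicit Arguments.
Unset Strict Implicit.
Import Order.TTheory GRing.Theory Num.Theory.
Local Open Scope ring_scope.

Definition vv (p : {poly int}) : nat := find (fun c : int => c != 0) p.
Definition nonneg (p : {poly int}) : bool := (p == 0) || (0 < p`_(vv p)).

Lemma vvP (p : {poly int}) n : (forall i, (i < n)%N -> p`_i = 0) -> p`_n != 0 -> vv p = n.
Proof.
move=> H0 Hn.
have hs : has (fun c : int => c != 0) p.
  apply/hasP; exists p`_n => //; apply: mem_nth.
  rewrite ltnNge; apply/negP => h; move: Hn; by rewrite nth_default.
rewrite /vv; case: (ltngtP (find (fun c : int => c != 0) p) n) => // h.
- by have := nth_find 0 hs; rewrite H0 ?eqxx.
- by have := before_find 0 h; rewrite Hn.
Qed.

Lemma vv_spec (p : {poly int}) : p != 0 -> (forall i, (i < vv p)%N -> p`_i = 0) /\ p`_(vv p) != 0.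
Proof.
move=> pn0.
have hs : has (fun c : int => c != 0) p.
  apply/hasP; exists (lead_coef p); last by rewrite lead_coef_eq0.
  rewrite lead_coefE; apply: mem_nth; rewrite prednK // lt0n size_poly_eq0 //.
split; last exact: (nth_find 0 hs).
move=> i hi; have := before_find 0 hi; by move/negbFE/eqP.
Qed.

Lemma nonnegI (p : {poly int}) n : (forall i, (i < n)%N -> p`_i = 0) -> 0 < p`_n -> nonneg p.
Proof.
move=> H0 Hn; rewrite /nonneg (vvP H0) ?Hn ?orbT //; by rewrite gt_eqF.
Qed.

Lemma nonnegE (p : {poly int}) n : (forall i, (i < n)%N -> p`_i = 0) -> p`_n != 0 -> nonneg p -> 0 < p`_n.
Proof.
move=> H0 Hn; rewrite /nonneg (vvP H0 Hn).
case/orP => // /eqP p0; move: Hn; by rewrite p0 coef0 eqxx.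
Qed.

Lemma nonneg_add (p q : {poly int}) : nonneg p -> nonneg q -> nonneg (p + q).
Proof.
case: (eqVneq p 0) => [-> _|pn0]; first by rewrite add0r.
case: (eqVneq q 0) => [-> pp _|qn0]; first by rewrite addr0.
case: (vv_spec pn0) => Hp Hpn; case: (vv_spec qn0) => Hq Hqn.
move=> /(nonnegE Hp Hpn) pp /(nonnegE Hq Hqn) qp.
case: (ltngtP (vv p) (vv q)) => h.
- apply: (@nonnegI _ (vv p)) => [i hi|]; rewrite coefD.
    by rewrite Hp // Hq ?addr0 //; exact: ltn_trans hi h.
  by rewrite Hq // addr0.
- apply: (@nonnegI _ (vv q)) => [i hi|]; rewrite coefD.
    by rewrite Hq // Hp ?addr0 //; exact: ltn_trans hi h.
  by rewrite Hp // add0r.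
- apply: (@nonnegI _ (vv p)) => [i hi|]; rewrite coefD.
    by rewrite Hp // Hq ?addr0 // -h.
  rewrite {2}h. exact: addr_gt0.
Qed.

Lemma nonneg_antisym (p : {poly int}) : nonneg p -> nonneg (- p) -> p = 0.
Proof.
case: (eqVneq p 0) => // pn0.
case: (vv_spec pn0) => Hp Hpn.
move=> /(nonnegE Hp Hpn) pp.
have Hq : forall i, (i < vv p)%N -> (- p)`_i = 0 by move=> i hi; rewrite coefN Hp ?oppr0.
have Hqn : (- p)`_(vv p) != 0 by rewrite coefN oppr_eq0.
move=> /(nonnegE Hq Hqn); rewrite coefN oppr_gt0 => h.
by have := lt_trans pp h; rewrite ltxx.
Qed.

Lemma nonneg_total (p : {poly int}) : nonneg p \/ nonneg (- p).
Proof.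
case: (eqVneq p 0) => [->|pn0]; first by left; rewrite /nonneg eqxx.
case: (vv_spec pn0) => Hp Hpn.
case: (ltgtP 0 p`_(vv p)) => h.
- by left; apply: (nonnegI Hp).
- right; apply: (@nonnegI _ (vv p)) => [i hi|]; first by rewrite coefN Hp ?oppr0.
  by rewrite coefN oppr_gt0.
- by move: Hpn; rewrite -h eqxx.
Qed.
Definition ple (x y : {poly int}) : Prop := nonneg (y - x).

Lemma nonneg_neg (r : {poly int}) n : (forall i, (i < n)%N -> r`_i = 0) -> r`_n < 0 -> ~ nonneg r.
Proof.
move=> H0 Hn /(nonnegE H0 (lt0r_neq0 _)).
Abort.

Lemma nonneg_neg (r : {poly int}) n : (forall i, (i < n)%N -> r`_i = 0) -> r`_n < 0 -> ~ nonneg r.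
Proof.
move=> H0 Hn hr; have Hn' : r`_n != 0 by rewrite lt_eqF.
have := nonnegE H0 Hn' hr => h; by have := lt_trans h Hn; rewrite ltxx.
Qed.

Lemma ple_lin : lin_ord_abelian ple.
Proof.
rewrite /ple; split; [|split; [|split; [|split]]].
- by move=> x; rewrite subrr /nonneg eqxx.
- move=> x y h1 h2; apply/eqP; rewrite eq_sym -subr_eq0; apply/eqP.
  apply: nonneg_antisym => //; by rewrite opprB.
- move=> x y z h1 h2; have := nonneg_add h2 h1; by rewrite addrA subrK.
- move=> x y; case: (nonneg_total (y - x)) => h; [by left|right]; by rewrite opprB in h.
- move=> x y z; by rewrite opprD addrACA subrr addr0.
Qed.

Lemma pos_ple (p : {poly int}) : lt_of ple 0 p <-> p != 0 /\ nonneg p.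
Proof.
rewrite /lt_of /ple subr0; split => [[h1 h2]|[h1 h2]]; split => //.
  by rewrite eq_sym; apply/eqP.
by move=> h; move: h1; rewrite -h eqxx.
Qed.

Lemma lt_pleI (x y : {poly int}) n : (forall i, (i < n)%N -> (y - x)`_i = 0) -> 0 < (y - x)`_n ->
  lt_of ple x y.
Proof.
move=> H0 Hn; split; first exact: nonnegI H0 Hn.
move=> exy; move: Hn; by rewrite exy subrr coef0 ltxx.
Qed.

Lemma arc_le_vv (p q : {poly int}) : p != 0 -> nonneg p -> q != 0 -> nonneg q ->
  arc_le ple p q <-> (vv q <= vv p)%N.
Proof.
move=> pn0 pp qn0 qp.
case: (vv_spec pn0) => Hp Hpn; case: (vv_spec qn0) => Hq Hqn.
have pg := nonnegE Hp Hpn pp; have qg := nonnegE Hq Hqn qp.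
split.
- rewrite leqNgt; apply/contraPN => h.
  case=> [H|[_ [m [m1 H]]]].
  + have [H1 _] := H 1%N isT.
    apply: (@nonneg_neg _ (vv p) _ _ H1).
      move=> i hi; by rewrite coefB mulr1n Hp // Hq ?subr0 //; exact: ltn_trans hi h.
    by rewrite coefB mulr1n Hq // sub0r oppr_lt0.
  + apply: (@nonneg_neg _ (vv p) _ _ H).
      move=> i hi; by rewrite coefB coefMn Hp // Hq ?mul0rn ?subr0 //; exact: ltn_trans hi h.
    by rewrite coefB coefMn Hq // mul0rn sub0r oppr_lt0.
- rewrite leq_eqVlt; case/orP => [/eqP h|h].
  + right; split.
    * exists (absz (q`_(vv q))).+1; split => //.
      apply: (@nonnegI _ (vv p)).
        move=> i hi; rewrite coefB coefMn (Hp i) // (Hq i) ?mul0rn ?subr0 //; by rewrite h.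
      have qv : q`_(vv p) = q`_(vv q) by rewrite h.
      rewrite coefB coefMn qv -mulr_natr.
      have : 1 <= p`_(vv p) by [].
      move: (p`_(vv p)) (q`_(vv q)) qg => a b hb ha.
      rewrite -addn1 natrD natr_absz ger0_norm ?ltW //.
      nia.
    * exists (absz (p`_(vv p))).+1; split => //.
      apply: (@nonnegI _ (vv q)).
        move=> i hi; rewrite coefB coefMn (Hq i) // (Hp i) ?mul0rn ?subr0 //; by rewrite -h.
      have pv : p`_(vv q) = p`_(vv p) by rewrite h.
      rewrite coefB coefMn pv -mulr_natr.
      have : 1 <= q`_(vv q) by [].
      move: (q`_(vv q)) (p`_(vv p)) pg => a b hb ha.
      rewrite -addn1 natrD natr_absz ger0_norm ?ltW //.
      nia.
  + left => n n1; apply: (@lt_pleI _ _ (vv q)).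
      move=> i hi; by rewrite coefB coefMn Hq // Hp ?mul0rn ?subr0 //; exact: ltn_trans hi h.
    by rewrite coefB coefMn Hp // mul0rn subr0.
Qed.

Lemma Xn_spec n : 'X^n != 0 :> {poly int} /\ nonneg 'X^n /\ vv 'X^n = n.
Proof.
have H0 : forall i, (i < n)%N -> ('X^n : {poly int})`_i = 0.
  by move=> i hi; rewrite coefXn (ltn_eqF hi).
have Hn : ('X^n : {poly int})`_n != 0 by rewrite coefXn eqxx.
split; first by rewrite monic_neq0 ?monicXn.
split; [apply: (nonnegI H0); by rewrite coefXn eqxx | exact: vvP].
Qed.

Lemma chi_ple : chi_arc_eq_omega0 ple.
Proof.
split.
- move=> k k0 [s [Hpos [Hdec Hco]]].
  have lk : (k.-1 < k)%N by rewrite prednK.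
  set l := Ordinal lk.
  have /pos_ple [l0 lp] := Hpos l.
  have [t0 [tp tv]] := Xn_spec (vv (s l)).+1.
  have [a Ha] := Hco ('X^((vv (s l)).+1)) (proj2 (pos_ple _) (conj t0 tp)).
  have /pos_ple [a0 ap] := Hpos a.
  move/(arc_le_vv a0 ap t0 tp): Ha; rewrite tv => Ha.
  have : (a <= l)%N by rewrite /= -ltnS prednK.
  rewrite leq_eqVlt; case/orP => [/eqP al|al].
  + have e : a = l by apply: val_inj.
    by move: Ha; rewrite e ltnn.
  + have [H _] := Hdec _ _ al.
    move/(arc_le_vv l0 lp a0 ap): H => H.
    by have := leq_ltn_trans H Ha; rewrite ltnn.
- exists (fun n => 'X^n); split; [|split].
  + move=> a; have [h1 [h2 _]] := Xn_spec a; exact/pos_ple.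
  + move=> a b ab; have [a1 [a2 a3]] := Xn_spec a; have [b1 [b2 b3]] := Xn_spec b.
    split; first by apply/(arc_le_vv b1 b2 a1 a2); rewrite a3 b3 ltnW.
    move/(arc_le_vv a1 a2 b1 b2); rewrite a3 b3 => h.
    by have := leq_ltn_trans h ab; rewrite ltnn.
  + move=> t /pos_ple [t0 tp]; exists (vv t).
    have [a1 [a2 a3]] := Xn_spec (vv t).
    by apply/(arc_le_vv a1 a2 t0 tp); rewrite a3.
Qed.

Local Notation RR := Rdefinitions.R.

Lemma nonneg_XnB a b : (b <= a)%N -> nonneg ('X^b - 'X^a : {poly int}).
Proof.
rewrite leq_eqVlt; case/orP => [/eqP ->|h]; first by rewrite subrr /nonneg eqxx.
apply: (@nonnegI _ b).
  move=> i hi; rewrite coefB !coefXn (ltn_eqF hi) (ltn_eqF (ltn_trans hi h)).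
  by rewrite subrr.
by rewrite coefB !coefXn eqxx (ltn_eqF h) subr0.
Qed.

Lemma lt_ple_Xn a b : lt_of ple ('X^a : {poly int}) 'X^b -> (b < a)%N.
Proof.
case=> h1 h2; rewrite ltnNge; apply/negP; rewrite leq_eqVlt; case/orP => [/eqP e|h].
  by apply: h2; rewrite e.
apply: (@nonneg_neg _ a _ _ h1).
  move=> i hi; rewrite coefB !coefXn (ltn_eqF hi) (ltn_eqF (ltn_trans hi h)).
  by rewrite subrr.
by rewrite coefB !coefXn eqxx (ltn_eqF h) sub0r oppr_lt0.
Qed.

Lemma r_exK (e : RR) : 0 < e -> exists K : nat, (K.+1%:R)^-1 < e.
Proof.
move=> e0; exists (Num.truncn (e^-1)).
have := truncnS_gt (e^-1); rewrite invf_plt ?posrE //.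
Qed.

Lemma r_le (r : RR) K : 0 < r -> (K < Num.truncn (r^-1))%N -> r <= (K.+1%:R)^-1.
Proof.
move=> r0; rewrite truncn_gt_nat => h; rewrite invf_pge ?posrE //.
Qed.

Lemma r_lt (r : RR) m : 0 < r -> r < (m.+1%:R)^-1 -> (m < Num.truncn (r^-1))%N.
Proof.
move=> r0; rewrite invf_pgt ?posrE // => h; rewrite truncn_gt_nat; exact: ltW.
Qed.

Lemma r_mono (r r' : RR) : 0 < r -> r <= r' -> (Num.truncn (r'^-1) <= Num.truncn (r^-1))%N.
Proof.
move=> r0 h; apply: le_truncn; rewrite lef_pV2 ?posrE //; exact: lt_le_trans h.
Qed.

Lemma fwd (X : topologicalType) (d : X -> X -> RR) : in_Ult_R d -> omega0_in_MG X.
Proof.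
move=> [[d0 [dxy [dsym dult]]] dtop].
exists {poly int}; exists ple; split; first exact: ple_lin.
split; first exact: chi_ple.
pose del := fun x y => if d x y == 0 then 0 else ('X^(Num.truncn ((d x y)^-1)) : {poly int}).
have dpos : forall x y, d x y != 0 -> 0 < d x y by move=> x y h; rewrite lt0r h d0.
have delnn : forall x y, nonneg (del x y).
  move=> x y; rewrite /del; case: ifP => _; first by rewrite /nonneg eqxx.
  by have [_ [h _]] := Xn_spec (Num.truncn (d x y)^-1).
exists del; split; [split; [|split; [|split]]|].
- move=> x y; rewrite /del; split.
    case: ifP => [/eqP h _|_ h]; first exact/dxy.
    by have [h1 _] := Xn_spec (Num.truncn (d x y)^-1); move: h1; rewrite h eqxx.
  by move=> ->; have /dxy -> := erefl y; rewrite eqxx.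
- by move=> x y; rewrite /ple subr0.
- by move=> x y; rewrite /del dsym.
- move=> x y z; rewrite /ple.
  case: (eqVneq (d x y) 0) => [e|nxy].
    by rewrite /del e eqxx subr0; apply: nonneg_add; apply: delnn.
  case: (eqVneq (d x z) 0) => [/dxy e|nxz].
    subst z; by rewrite {1}/del (proj2 (dxy x x) erefl) eqxx add0r subrr /nonneg eqxx.
  case: (eqVneq (d z y) 0) => [/dxy e|nzy].
    subst z; by rewrite {2}/del (proj2 (dxy y y) erefl) eqxx addr0 subrr /nonneg eqxx.
  rewrite /del (negPf nxy) (negPf nxz) (negPf nzy).
  have := dult x y z; rewrite le_max; case/orP => h.
  + rewrite addrAC; apply: nonneg_add; last by have [_ [hh _]] := Xn_spec (Num.truncn (d z y)^-1).
    apply: nonneg_XnB; exact: r_mono (dpos _ _ nxy) h.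
  + rewrite -addrA; apply: nonneg_add; first by have [_ [hh _]] := Xn_spec (Num.truncn (d x z)^-1).
    apply: nonneg_XnB; exact: r_mono (dpos _ _ nxy) h.
- move=> U; rewrite dtop; split => H x Ux; have := H x Ux.
  + case=> e [e0 sub]; have [K HK] := r_exK e0.
    have [k1 [k2 _]] := Xn_spec K.
    exists 'X^K; split; first exact/pos_ple.
    move=> y /= hy; apply: sub => /=.
    case: (eqVneq (d x y) 0) => [->//|nxy].
    move: hy; rewrite /del (negPf nxy) => /lt_ple_Xn h.
    exact: le_lt_trans (r_le (dpos _ _ nxy) h) HK.
  + case=> r [/pos_ple [r0 rp] sub].
    have [Hr Hrn] := vv_spec r0; have rg := nonnegE Hr Hrn rp.
    exists ((vv r).+1%:R^-1); split; first by rewrite invr_gt0 ltr0n.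
    move=> y /= hy; apply: sub => /=.
    case: (eqVneq (d x y) 0) => [e|nxy].
      by rewrite /del e eqxx; apply/pos_ple.
    rewrite /del (negPf nxy); have h := r_lt (dpos _ _ nxy) hy.
    apply: (@lt_pleI _ _ (vv r)).
      move=> i hi; rewrite coefB coefXn Hr // (ltn_eqF (ltn_trans hi h)) subrr //.
    by rewrite coefB coefXn (ltn_eqF h) subr0.
Qed.

Lemma le_mulrn (G : zmodType) (le : G -> G -> Prop) : lin_ord_abelian le ->
  forall x y n, le x y -> le (x *+ n) (y *+ n).
Proof.
move=> [lr [la [lt [ltot lc]]]] x y n h; elim: n => [|n IH]; first by rewrite !mulr0n.
rewrite !mulrS; apply: (lt _ (y + x *+ n)); first exact: lc.
rewrite (addrC y) (addrC y); exact: lc.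
Qed.

Lemma arc_le_L (G : zmodType) (le : G -> G -> Prop) : lin_ord_abelian le ->
  forall p q r m, (1 <= m)%N -> arc_le le p q -> le q (r *+ m) -> arc_le le p r.
Proof.
move=> Hl; have [lr [la [lt [ltot lc]]]] := Hl.
move=> p q r m m1 hpq hqr.
case: (pselect (exists n, (1 <= n)%N /\ le r (p *+ n))) => [ex|nex].
- right; split => //.
  case: hpq => [H|[_ [M [M1 HM]]]].
  + have [h1 _] := H 1%N isT; rewrite mulr1n in h1.
    exists m; split => //; exact: lt h1 hqr.
  + exists (m * M)%N; split; first by rewrite muln_gt0 m1 M1.
    rewrite mulrnA; apply: lt HM _; exact: le_mulrn.
- left => n n1; split.
    case: (ltot (p *+ n) r) => // h; exfalso; apply: nex; by exists n.
  move=> e; apply: nex; exists n; split => //; rewrite e; exact: lr.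
Qed.

Lemma inv_nat_lt (m n : nat) : ((n.+1%:R)^-1 < (m.+1%:R)^-1 :> RR) -> (m < n)%N.
Proof. by rewrite ltf_pV2 ?posrE ?ltr0n // ltr_nat ltnS. Qed.

Lemma inv_nat_le (k K : nat) : (K <= k)%N -> ((k.+1%:R)^-1 <= (K.+1%:R)^-1 :> RR).
Proof. by move=> h; rewrite lef_pV2 ?posrE ?ltr0n // ler_nat ltnS. Qed.

Lemma bwd (X : topologicalType) : omega0_in_MG X -> exists d : X -> X -> RR, in_Ult_R d.
Proof.
move=> [G [le [Hl [[_ [s [spos [sdec sco]]]] [d [[d0 [dnn [dsym dtri]]] dgen]]]]]].
have [lr [la [lt [ltot lc]]]] := Hl.
have [kk kkP] : {kk : G -> nat & forall t, lt_of le 0 t ->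
    arc_le le (s (kk t)) t /\ (forall n, arc_le le (s n) t -> (kk t <= n)%N)}.
  apply: (@choice G nat (fun t n => lt_of le 0 t ->
    arc_le le (s n) t /\ (forall m, arc_le le (s m) t -> (n <= m)%N))) => t.
  case: (pselect (lt_of le 0 t)) => [t0|nt0]; last by exists 0%N.
  have [a Ha] := sco t t0.
  have exP : exists n, `[< arc_le le (s n) t >] by exists a; apply/asboolP.
  case: (ex_minnP exP) => n /asboolP Hn Hmin; exists n => _; split => // m Hm.
  by apply: Hmin; apply/asboolP.
pose D := fun x y => if d x y == 0 then 0 else ((kk (d x y)).+1%:R)^-1 : RR.
have dpos : forall x y, d x y != 0 -> lt_of le 0 (d x y).
  move=> x y h; split => //; by move=> e; move: h; rewrite -e eqxx.
have Dnn : forall x y, 0 <= D x y.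
  by move=> x y; rewrite /D; case: ifP => // _; rewrite invr_ge0 ler0n.
have dxx : forall x, d x x = 0 by move=> x; apply/d0.
have kkmono : forall t u m, (1 <= m)%N -> lt_of le 0 t -> lt_of le 0 u ->
    le t (u *+ m) -> (kk u <= kk t)%N.
  move=> t u m m1 n1 n2 h.
  have [h1 _] := kkP _ n1; have [_ h2] := kkP _ n2.
  apply: h2; exact: arc_le_L h1 h.
exists D; split; [split; [|split; [|split]]|].
- exact: Dnn.
- move=> x y; rewrite /D; split.
    case: ifP => [/eqP h _|_ h]; first exact/d0.
    by move/eqP: h; rewrite invr_eq0 pnatr_eq0.
  by move=> ->; rewrite dxx eqxx.
- by move=> x y; rewrite /D dsym.
- move=> x y z.
  case: (eqVneq (d x y) 0) => [e|nxy].
    by rewrite {1}/D e eqxx le_max Dnn.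
  case: (eqVneq (d x z) 0) => [/d0 e|nxz].
    by subst z; rewrite le_max lexx orbT.
  case: (eqVneq (d z y) 0) => [/d0 e|nzy].
    by subst z; rewrite le_max lexx.
  rewrite /D (negPf nxy) (negPf nxz) (negPf nzy) le_max.
  case: (ltot (d x z) (d z y)) => h.
  + apply/orP; right; apply: inv_nat_le; apply: (kkmono _ _ 2%N) => //; try exact: dpos.
    apply: lt (dtri x y z) _; rewrite mulr2n; exact: lc.
  + apply/orP; left; apply: inv_nat_le; apply: (kkmono _ _ 2%N) => //; try exact: dpos.
    apply: lt (dtri x y z) _; rewrite mulr2n (addrC (d x z)); exact: lc.
- move=> U; rewrite dgen; split => H x Ux; have := H x Ux.
  + case=> r [r0 sub]; have [j Hj] := sco r r0.
    exists ((j.+1%:R)^-1); split; first by rewrite invr_gt0 ltr0n.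
    move=> y /= hy; apply: sub => /=.
    case: (eqVneq (d x y) 0) => [->//|nxy].
    move: hy; rewrite /D (negPf nxy) => /inv_nat_lt h.
    have [_ hmin] := kkP _ (dpos _ _ nxy).
    have nj : ~ arc_le le (s j) (d x y).
      by move=> hh; have := leq_ltn_trans (hmin _ hh) h; rewrite ltnn.
    case: (ltot (d x y) r) => hr.
      split => // e; apply: nj; by rewrite e.
    exfalso; apply: nj; apply: (arc_le_L Hl (m:=1%N)) Hj _ => //; by rewrite mulr1n.
  + case=> e [e0 sub]; have [K HK] := r_exK e0.
    exists (s K); split; first exact: spos.
    move=> y /= [hy1 hy2]; apply: sub => /=.
    case: (eqVneq (d x y) 0) => [ee|nxy]; first by rewrite /D ee eqxx.
    rewrite /D (negPf nxy); apply: le_lt_trans HK; apply: inv_nat_le.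
    rewrite leqNgt; apply/negP => hk.
    have [h1 _] := kkP _ (dpos _ _ nxy).
    have [_ nle] := sdec _ _ hk; apply: nle.
    apply: (arc_le_L Hl (m:=1%N)) h1 _ => //; by rewrite mulr1n.
Qed.

Theorem proposition2p46 (X : topologicalType) :
  (exists d : X -> X -> Rdefinitions.R, in_Ult_R d) <-> omega0_in_MG X.
Proof.
split; [by case=> d; apply: fwd | exact: bwd].
Qed.
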